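(* Let $\mathcal H_A$ be a finite-dimensional Hilbert space, $N\ge 1$, and let $\mathcal F(A)\subseteq\mathcal D(\mathcal H_A)$ be a set of free states and $\mathcal F(A_1\dots A_N)\subseteq\mathcal D(\mathcal H_A^{\otimes N})$ a set of $N$-partite free states. Let $\mathcal F'(A)\subseteq\mathcal F(A)$ be affine and let $\Delta'$ be a resource-censoring map for $(\mathcal F(A),\mathcal F'(A))$ satisfying the standing assumptions below. Then the censorship implemented by $(\Delta')^{\otimes N}$ is breakable if and only if $\mathcal F'(A_1\dots A_N)\setminus\mathcal F(A_1\dots A_N)\neq\emptyset$, where $\mathcal F'(A_1\dots A_N)=\mathrm{Aff}\big(\mathcal F'(A)\otimes\dots\otimes\mathcal F'(A)\big)$ ($N$ factors).
   Context: For a finite-dimensional Hilbert space $\mathcal H$, $\mathcal D(\mathcal H)$ denotes the set of density operators (positive semidefinite, unit trace) on $\mathcal H$. For a set $S\subseteq\mathcal D(\mathcal H)$, its affine hull is $\mathrm{Aff}(S)=\{\sum_a t_a\sigma_a:\ \text{finitely many }\sigma_a\in S,\ t_a\in\mathbb R,\ \sum_a t_a=1\}\cap\mathcal D(\mathcal H)$, and its convex hull $\mathrm{Conv}(S)$ is defined the same way but with $t_a\ge 0$. A set $S$ is called affine if $\mathrm{Aff}(S)=S$. For sets $S_1,\dots,S_N$ of states, $S_1\otimes\dots\otimes S_N=\{\rho_1\otimes\dots\otimes\rho_N:\rho_a\in S_a\}$. A channel is a linear completely positive trace-preserving map. Each of $N$ senders $A_1,\dots,A_N$ holds a copy of the system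 $A$ (Hilbert space $\mathcal H_A$). A resource-censoring (RC) map for $(\mathcal F(A),\mathcal F'(A))$, with $\mathcal F'(A)\subseteq\mathcal F(A)$ affine, is a channel $\Delta'$ on operators on $\mathcal H_A$ with $\Delta'(\rho)\in\mathcal F(A)$ for all $\rho\in\mathcal D(\mathcal H_A)$ and $\Delta'(\sigma)=\sigma$ for all $\sigma\in\mathcal F'(A)$. Standing assumptions: $\Delta'\circ\Delta'=\Delta'$, and $\mathcal F'(A)$ is exactly the set of density operators fixed by $\Delta'$. The censorship is called breakable if there exists $\rho\in\mathcal D(\mathcal H_A^{\otimes N})$ with $\rho\notin\mathcal F(A_1\dots A_N)$ and $(\Delta')^{\otimes N}(\rho)=\rho$; otherwise it is called unbreakable. *)

(* Defs.v *)
(* Scalars: an arbitrary numClosedFieldType C (e.g. the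
   complex numbers); operators on H_A = C^d are 'M[C]_d, operators on
   H_A^{(x)N} are 'M[C]_(tdim d N) with the standard Kronecker ordering of
   mathcomp-real-closed's mxtens. *)
From HB Require Import structures.
From mathcomp Require Import all_boot all_order all_algebra.
From mathcomp Require Export mxtens.
Set Implicit Arguments. Unset Strict Implicit. Unset Printing Implicit Defensive.
Import Order.TTheory GRing.Theory Num.Theory.
Local Open Scope ring_scope.

Section Defs.
Variable C : numClosedFieldType.

Definition adjmx {m n} (A : 'M[C]_(m, n)) : 'M[C]_(n, m) := map_mx Num.conj A^T.

Definition psd {n} (X : 'M[C]_n) : Prop :=
  adjmx X = X /\ forall v : 'cV[C]_n, 0 <= (adjmx v *m X *m v) 0 0.

Definition density {n} (X : 'M[C]_n) : Prop := psd X /\ \tr X = 1.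

Definition Aff {n} (S : 'M[C]_n -> Prop) : 'M[C]_n -> Prop := fun X =>
  (exists (k : nat) (t : 'I_k -> C) (s : 'I_k -> 'M[C]_n),
      (forall a, S (s a)) /\ (forall a, t a \is Num.real) /\
      \sum_(a < k) t a = 1 /\ X = \sum_(a < k) t a *: s a)
  /\ density X.

Definition affine {n} (S : 'M[C]_n -> Prop) : Prop :=
  forall X, Aff S X <-> S X.

Definition tens_map {m n} (Phi : 'M[C]_m -> 'M[C]_m) (Psi : 'M[C]_n -> 'M[C]_n)
  (X : 'M[C]_(m * n)) : 'M[C]_(m * n) :=
  \sum_(a < m) \sum_(b < m) \sum_(c < n) \sum_(e < n)
     X (mxtens_index (a, c)) (mxtens_index (b, e))
       *: (Phi (delta_mx a b) *t Psi (delta_mx c e)).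

Fixpoint tdim (d k : nat) : nat := if k is k'.+1 then (d * tdim d k')%N else 1%N.

Lemma tdim_expn d k : tdim d k = (tdim d k)%N.
Proof. by elim: k => [|k IH] //=; rewrite IH expnS. Qed.

Fixpoint tens_pow_map {d} (Phi : 'M[C]_d -> 'M[C]_d) (k : nat)
  : 'M[C]_(tdim d k) -> 'M[C]_(tdim d k) :=
  match k return 'M[C]_(tdim d k) -> 'M[C]_(tdim d k) with
  | 0 => fun X => X
  | k'.+1 => tens_map Phi (@tens_pow_map d Phi k')
  end.

Fixpoint tens_pow_set {d} (S : 'M[C]_d -> Prop) (k : nat) : 'M[C]_(tdim d k) -> Prop :=
  match k return 'M[C]_(tdim d k) -> Prop with
  | 0 => fun X => X = 1
  | k'.+1 => fun X => exists rho Y, S rho /\ @tens_pow_set d S k' Y /\ X = rho *t Y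
  end.

Definition completely_positive {d} (Phi : 'M[C]_d -> 'M[C]_d) : Prop :=
  forall (k : nat) (X : 'M[C]_(k * d)), psd X -> psd (tens_map (fun Y : 'M[C]_k => Y) Phi X).

Definition channel {d} (Phi : 'M[C]_d -> 'M[C]_d) : Prop :=
  linear Phi /\ completely_positive Phi /\ (forall X, \tr (Phi X) = \tr X).

Definition RC_map {d} (F F' : 'M[C]_d -> Prop) (Delta : 'M[C]_d -> 'M[C]_d) : Prop :=
  channel Delta /\ (forall rho, density rho -> F (Delta rho)) /\
  (forall sigma, F' sigma -> Delta sigma = sigma).

Definition breakable {d} (N : nat) (FN : 'M[C]_(tdim d N) -> Prop)
  (Delta : 'M[C]_d -> 'M[C]_d) : Prop :=
  exists rho : 'M[C]_(tdim d N), density rho /\ ~ FN rho /\ @tens_pow_map d Delta N rho = rho.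

End Defs.

Arguments tens_pow_map {C d} Phi k _.
Arguments tens_pow_set {C d} S k _.
Arguments breakable {C d} N FN Delta.

(* Main.v *)
Require Import Defs.
From HB Require Import structures.
From mathcomp Require Import all_boot all_order all_algebra.
From mathcomp Require Import ring.
Import Order.TTheory GRing.Theory Num.Theory.
Local Open Scope ring_scope.
Set Implicit Arguments. Unset Strict Implicit. Unset Printing Implicit Defensive.

Section H.
Variable C : numClosedFieldType.

Lemma adjmxE m n (A : 'M[C]_(m, n)) i j : adjmx A i j = (A j i)^*.
Proof. by rewrite /adjmx !mxE. Qed.

Lemma adjmxK m n (A : 'M[C]_(m, n)) : adjmx (adjmx A) = A.
Proof. by apply/matrixP=> i j; rewrite !adjmxE conjCK. Qed.

Lemma adjmxM m n p (A : 'M[C]_(m, n)) (B : 'M[C]_(n, p)) :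
  adjmx (A *m B) = adjmx B *m adjmx A.
Proof.
apply/matrixP=> i j; rewrite /adjmx !mxE rmorph_sum; apply: eq_bigr => k _.
by rewrite !mxE rmorphM mulrC.
Qed.

Lemma adjmxD m n (A B : 'M[C]_(m, n)) : adjmx (A + B) = adjmx A + adjmx B.
Proof. by apply/matrixP=> i j; rewrite /adjmx !mxE rmorphD. Qed.

Lemma adjmxZ m n c (A : 'M[C]_(m, n)) : adjmx (c *: A) = c^* *: adjmx A.
Proof. by apply/matrixP=> i j; rewrite /adjmx !mxE rmorphM. Qed.

Lemma adjmx_sum m n I (r : seq I) (P : pred I) (F : I -> 'M[C]_(m, n)) :
  adjmx (\sum_(i <- r | P i) F i) = \sum_(i <- r | P i) adjmx (F i).
Proof.
apply/matrixP=> i j; rewrite /adjmx !mxE !summxE rmorph_sum; apply: eq_bigr => k _.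
by rewrite !mxE.
Qed.

Lemma adjmx_tens m n p q (A : 'M[C]_(m, n)) (B : 'M[C]_(p, q)) :
  adjmx (A *t B) = adjmx A *t adjmx B.
Proof. by apply/matrixP=> i j; rewrite /adjmx !mxE rmorphM. Qed.

Lemma adjmx1 n : adjmx (1 : 'M[C]_n) = 1.
Proof. by apply/matrixP=> i j; rewrite /adjmx !mxE eq_sym rmorph_nat. Qed.

Lemma trace_tens m n (A : 'M[C]_m) (B : 'M[C]_n) : \tr (A *t B) = \tr A * \tr B.
Proof. by rewrite /mxtrace mulr_sum; apply: eq_bigr => i _; rewrite !mxE. Qed.

Lemma entry11 m (A : 'M[C]_(1, m)) (B : 'M[C]_(m, 1)) :
  (A *m B) 0 0 = \sum_k A 0 k * B k 0.
Proof. by rewrite mxE. Qed.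

Lemma tensmxDl m n p q (A1 A2 : 'M[C]_(m, n)) (B : 'M[C]_(p, q)) :
  (A1 + A2) *t B = A1 *t B + A2 *t B.
Proof. by apply/matrixP=> i j; rewrite !mxE mulrDl. Qed.
Lemma tensmxDr m n p q (A : 'M[C]_(m, n)) (B1 B2 : 'M[C]_(p, q)) :
  A *t (B1 + B2) = A *t B1 + A *t B2.
Proof. by apply/matrixP=> i j; rewrite !mxE mulrDr. Qed.
Lemma tensmxZl m n p q c (A : 'M[C]_(m, n)) (B : 'M[C]_(p, q)) :
  (c *: A) *t B = c *: (A *t B).
Proof. by apply/matrixP=> i j; rewrite !mxE mulrA. Qed.
Lemma tensmxZr m n p q c (A : 'M[C]_(m, n)) (B : 'M[C]_(p, q)) :
  A *t (c *: B) = c *: (A *t B).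
Proof. by apply/matrixP=> i j; rewrite !mxE mulrCA. Qed.

Lemma tensmx_suml m n p q I (r : seq I) (P : pred I) (F : I -> 'M[C]_(m, n)) (B : 'M[C]_(p, q)) :
  (\sum_(i <- r | P i) F i) *t B = \sum_(i <- r | P i) (F i *t B).
Proof.
by apply: (big_morph (fun A => A *t B)) => [A1 A2|]; rewrite ?tensmxDl ?tens0mx.
Qed.
Lemma tensmx_sumr m n p q I (r : seq I) (P : pred I) (F : I -> 'M[C]_(p, q)) (A : 'M[C]_(m, n)) :
  A *t (\sum_(i <- r | P i) F i) = \sum_(i <- r | P i) (A *t F i).
Proof.
by apply: (big_morph (fun B => A *t B)) => [A1 A2|]; rewrite ?tensmxDr ?tensmx0.
Qed.

Section Lin.
Variables (m : nat) (f : 'M[C]_m -> 'M[C]_m).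
Hypothesis hf : linear f.
Lemma linD x y : f (x + y) = f x + f y.
Proof. by case: (GRing.semilinear_linear hf) => _ ->. Qed.
Lemma linZ c x : f (c *: x) = c *: f x.
Proof. by case: (GRing.semilinear_linear hf) => ->. Qed.
Lemma lin0 : f 0 = 0.
Proof. by have := linZ 0 0; rewrite !scale0r. Qed.
Lemma lin_sum I (r : seq I) (P : pred I) (F : I -> 'M[C]_m) :
  f (\sum_(i <- r | P i) F i) = \sum_(i <- r | P i) f (F i).
Proof. exact: (big_morph f linD lin0). Qed.
End Lin.


Definition sp n (S : 'M[C]_n -> Prop) (X : 'M[C]_n) : Prop :=
  exists l : seq (C * 'M[C]_n), (forall p, p \in l -> S p.2) /\
     X = \sum_(p <- l) p.1 *: p.2.

Section Sp.
Variable n : nat.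
Implicit Types S T : 'M[C]_n -> Prop.

Lemma sp0 S : sp S 0.
Proof. by exists [::]; split => //; rewrite big_nil. Qed.

Lemma spD S X Y : sp S X -> sp S Y -> sp S (X + Y).
Proof.
move=> [l1 [h1 ->]] [l2 [h2 ->]]; exists (l1 ++ l2); split; last by rewrite big_cat.
by move=> p; rewrite mem_cat => /orP[/h1|/h2].
Qed.

Lemma spZ S c X : sp S X -> sp S (c *: X).
Proof.
move=> [l [h ->]]; exists [seq (c * p.1, p.2) | p <- l]; split.
  by move=> p /mapP[q /h hq ->].
rewrite big_map scaler_sumr; apply: eq_bigr => p _; by rewrite scalerA.
Qed.

Lemma sp_in S X : S X -> sp S X.
Proof. by move=> hX; exists [:: (1, X)]; split; [move=> p; rewrite inE => /eqP->|rewrite big_seq1 scale1r]. Qed.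

Lemma sp_sum S I (r : seq I) (P : pred I) (F : I -> 'M[C]_n) :
  (forall i, P i -> sp S (F i)) -> sp S (\sum_(i <- r | P i) F i).
Proof. by move=> h; apply: big_ind => //; [exact: sp0 | exact: spD]. Qed.

Lemma sp_trans S T X : (forall Y, S Y -> sp T Y) -> sp S X -> sp T X.
Proof.
move=> h [l [hl ->]]; rewrite big_seq; apply: sp_sum => p /hl hp.
by apply: spZ; apply: h.
Qed.

Lemma sp_lin (f : 'M[C]_n -> 'M[C]_n) S T X : linear f ->
  (forall Y, S Y -> sp T (f Y)) -> sp S X -> sp T (f X).
Proof.
move=> hf h [l [hl ->]]; rewrite (lin_sum hf) big_seq; apply: sp_sum => p /hl hp.
by rewrite (linZ hf); apply: spZ; apply: h.
Qed.
End Sp.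

Lemma sp_tens m n (S1 : 'M[C]_m -> Prop) (S2 : 'M[C]_n -> Prop) A B :
  sp S1 A -> sp S2 B ->
  sp (fun M => exists a b, S1 a /\ S2 b /\ M = a *t b) (A *t B).
Proof.
move=> [l1 [h1 ->]] [l2 [h2 ->]].
rewrite tensmx_suml big_seq; apply: sp_sum => p /h1 hp.
rewrite tensmxZl; apply: spZ.
rewrite tensmx_sumr big_seq; apply: sp_sum => q /h2 hq.
rewrite tensmxZr; apply: spZ; apply: sp_in.
by exists p.2, q.2.
Qed.


Lemma tens_map_lin m n (Phi : 'M[C]_m -> 'M[C]_m) (Psi : 'M[C]_n -> 'M[C]_n) :
  linear (tens_map Phi Psi).
Proof.
move=> c X Y; rewrite /tens_map scaler_sumr -big_split; apply: eq_bigr => a _.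
rewrite scaler_sumr -big_split; apply: eq_bigr => b _.
rewrite scaler_sumr -big_split; apply: eq_bigr => c' _.
rewrite scaler_sumr -big_split; apply: eq_bigr => e _.
by rewrite !mxE scalerDl scalerA.
Qed.

Lemma tens_map_tens m n (Phi : 'M[C]_m -> 'M[C]_m) (Psi : 'M[C]_n -> 'M[C]_n) A B :
  linear Phi -> linear Psi -> tens_map Phi Psi (A *t B) = Phi A *t Psi B.
Proof.
move=> hP hQ.
rewrite [in RHS](matrix_sum_delta A) [in RHS](matrix_sum_delta B).
rewrite !(lin_sum hP) tensmx_suml /tens_map; apply: eq_bigr => a _.
rewrite !(lin_sum hP) tensmx_suml; apply: eq_bigr => b _.
rewrite (linZ hP) tensmxZl !(lin_sum hQ) tensmx_sumr scaler_sumr; apply: eq_bigr => c _.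
rewrite !(lin_sum hQ) tensmx_sumr scaler_sumr; apply: eq_bigr => e _.
by rewrite (linZ hQ) tensmxZr scalerA tensmxE.
Qed.

Lemma tens_pow_lin d (Phi : 'M[C]_d -> 'M[C]_d) k : linear (tens_pow_map Phi k).
Proof. by case: k => [|k] //=; exact: tens_map_lin. Qed.


Lemma adjmx_delta m n (i : 'I_m) (j : 'I_n) : adjmx (delta_mx i j : 'M[C]_(m, n)) = delta_mx j i.
Proof. by apply/matrixP=> x y; rewrite /adjmx !mxE rmorph_nat andbC. Qed.

Lemma rank1_delta d (a b : 'I_d) :
  sp (fun M => exists v : 'cV[C]_d, M = v *m adjmx v) (delta_mx a b).
Proof.
have E x : (delta_mx x 0 : 'cV[C]_d) *m adjmx (delta_mx x 0) = delta_mx x x.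
  by rewrite adjmx_delta mul_delta_mx.
case: (eqVneq a b) => [<-|nab].
  by apply: sp_in; exists (delta_mx a 0); rewrite E.
pose v1 : 'cV[C]_d := delta_mx a 0 + delta_mx b 0.
pose v2 : 'cV[C]_d := delta_mx a 0 + 'i *: delta_mx b 0.
have -> : delta_mx a b = 2^-1 *: (v1 *m adjmx v1) + ('i / 2) *: (v2 *m adjmx v2)
   + (- (1 + 'i) / 2) *: ((delta_mx a 0 : 'cV[C]_d) *m adjmx (delta_mx a 0 : 'cV[C]_d))
   + (- (1 + 'i) / 2) *: ((delta_mx b 0 : 'cV[C]_d) *m adjmx (delta_mx b 0 : 'cV[C]_d)).
  apply/matrixP => x y; rewrite !mxE !big_ord1 /v1 /v2 /adjmx !mxE.
  rewrite ?(rmorphD, rmorphM, rmorph_nat, conjCi) /=.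
  rewrite !eqxx !andbT conjCi -mulnb natrM.
  set Ax := (x == a)%:R; set Ay := (y == a)%:R; set Bx := (x == b)%:R; set By := (y == b)%:R.
  have hi : 'i * 'i = -1 :> C := mulCii C.
  clear E v1 v2; move: hi; generalize ('i : C) => i hi.
  have h2 : (2 : C) != 0 by rewrite pnatr_eq0.
  transitivity (Ax * By + (i * i + 1) * ((Bx * Ay - Ax * By - i * Bx * By) / 2)).
    by rewrite hi addNr mul0r addr0.
  by field.
apply: spD; [apply: spD; [apply: spD|]|]; apply: spZ; apply: sp_in; eexists; reflexivity.
Qed.


Section Main.
Variables (d : nat) (F' : 'M[C]_d -> Prop) (Delta : 'M[C]_d -> 'M[C]_d).
Hypothesis hlin : linear Delta.
Hypothesis hden : forall rho, density rho -> density (Delta rho).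
Hypothesis hF' : forall rho, F' rho <-> density rho /\ Delta rho = rho.
Hypothesis hidem : forall X, Delta (Delta X) = Delta X.

Lemma entry11M m (A : 'M[C]_(1, m)) (B : 'M[C]_(m, 1)) :
  (A *m B) 0 0 = \sum_k A 0 k * B k 0.
Proof. by rewrite mxE. Qed.

Lemma rank1_sp (v : 'cV[C]_d) : sp F' (Delta (v *m adjmx v)).
Proof.
case: (eqVneq v 0) => [->|nz]; first by rewrite mul0mx (lin0 hlin); exact: sp0.
set P := v *m adjmx v.
have ht : \tr P = \sum_i `|v i 0| ^+ 2.
  rewrite /mxtrace; apply: eq_bigr => i _.
  by rewrite /P mxE big_ord1 /adjmx !mxE normCK.
have t0 : 0 <= \tr P by rewrite ht; apply: sumr_ge0 => i _; exact: exprn_ge0.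
have tn0 : \tr P != 0.
  apply/negP; rewrite ht => /eqP/psumr_eq0P h.
  case/eqP: nz; apply/matrixP => i j; rewrite [j]ord1 mxE.
  by apply/eqP; rewrite -normr_eq0 -sqrf_eq0; apply/eqP; apply: h => // k _; exact: exprn_ge0.
set t := \tr P in t0 tn0 *.
have tc : t^* = t by apply/eqP; rewrite -CrealE; exact: ger0_real.
set rho := t^-1 *: P.
have drho : density rho.
  split; last by rewrite mxtraceZ mulVf.
  split.
    by rewrite adjmxZ /P adjmxM adjmxK fmorphV /rho; congr (_^-1 *: _); exact: tc.
  move=> w; rewrite /rho -scalemxAr -scalemxAl mxE; apply: mulr_ge0; first by rewrite invr_ge0.
  rewrite mulmxA -(mulmxA (adjmx w *m v)) entry11M big_ord1.
  have -> : (adjmx v *m w) = adjmx (adjmx w *m v) by rewrite adjmxM adjmxK.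
  by rewrite {2}/adjmx !mxE -normCK exprn_ge0.
have hP : P = t *: rho by rewrite /rho scalerA mulfV // scale1r.
rewrite hP (linZ hlin); apply: spZ; apply: sp_in.
by apply/hF'; split; [exact: hden | exact: hidem].
Qed.

Lemma range_sp X : sp F' (Delta X).
Proof.
apply: (sp_lin hlin (S := fun M => exists v : 'cV[C]_d, M = v *m adjmx v)).
  by move=> Y [v ->]; exact: rank1_sp.
rewrite (matrix_sum_delta X); apply: sp_sum => i _; apply: sp_sum => j _.
by apply: spZ; exact: rank1_delta.
Qed.

Lemma pow_sp k (X : 'M[C]_(tdim d k)) : sp (tens_pow_set F' k) (tens_pow_map Delta k X).
Proof.
elim: k X => [|k IH] X /=.
  have -> : X = X 0 0 *: (1 : 'M[C]_1).
    by apply/matrixP => i j; rewrite [i]ord1 [j]ord1 !mxE mulr1.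
  by apply: spZ; apply: sp_in.
rewrite /tens_map; do 4 (apply: sp_sum => ? _); apply: spZ.
exact: (sp_tens (range_sp _) (IH _)).
Qed.

Lemma pow_fix k (Y : 'M[C]_(tdim d k)) : tens_pow_set F' k Y -> tens_pow_map Delta k Y = Y.
Proof.
elim: k Y => [|k IH] Y //= [rho [Z [hr [hZ ->]]]].
rewrite tens_map_tens //; last exact: tens_pow_lin.
by rewrite IH //; case/hF': hr => _ ->.
Qed.

Lemma pow_herm k (Y : 'M[C]_(tdim d k)) : tens_pow_set F' k Y -> adjmx Y = Y /\ \tr Y = 1.
Proof.
elim: k Y => [|k IH] Y /=.
  by move=> ->; rewrite adjmx1 mxtrace1.
move=> [rho [Z [hr [hZ ->]]]].
case/hF': hr => [[[hh _] htr] _]; case: (IH _ hZ) => h1 h2.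
by rewrite adjmx_tens trace_tens hh h1 htr h2 mulr1.
Qed.
End Main.

Lemma trace_sum n I (r : seq I) (P : pred I) (F : I -> 'M[C]_n) :
  \tr (\sum_(i <- r | P i) F i) = \sum_(i <- r | P i) \tr (F i).
Proof. exact: raddf_sum. Qed.

End H.

Theorem theorem1 (C : numClosedFieldType) (d N : nat)
  (F : 'M[C]_d -> Prop) (FN : 'M[C]_(tdim d N) -> Prop) (F' : 'M[C]_d -> Prop)
  (Delta : 'M[C]_d -> 'M[C]_d) :
  (1 <= N)%N ->
  (forall rho, F rho -> density rho) ->
  (forall rho, FN rho -> density rho) ->
  (forall sigma, F' sigma -> F sigma) ->
  affine F' ->
  RC_map F F' Delta ->
  (forall X, Delta (Delta X) = Delta X) ->
  (forall rho, F' rho <-> density rho /\ Delta rho = rho) ->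
  (breakable N FN Delta <->
   exists sigma, Aff (tens_pow_set F' N) sigma /\ ~ FN sigma).
Proof.
move=> _ hF _ _ _ [[hlin _] [hRC _]] hidem hF'.
have hden : forall rho, density rho -> density (Delta rho) by move=> r h; exact: hF (hRC r h).
split.
- move=> [rho [dr [nF hT]]]; exists rho; split => //; split => //.
  have [l [hl hrho]] := pow_sp hlin hden hF' hidem rho; rewrite hT in hrho.
  have hh : rho = \sum_(p <- l) p.1^* *: p.2.
    rewrite -{1}(proj1 (proj1 dr)) {1}hrho adjmx_sum big_seq [RHS]big_seq.
    apply: eq_bigr => p /hl hp; rewrite adjmxZ.
    by case: (pow_herm hF' hp) => -> _.
  have hre : rho = \sum_(p <- l) 'Re p.1 *: p.2.
    have h2 : (2 : C) != 0 by rewrite pnatr_eq0.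
    transitivity (2^-1 *: (rho + rho)).
      by rewrite -mulr2n -scaler_nat scalerA mulVf // scale1r.
    rewrite {1}hrho hh -big_split scaler_sumr; apply: eq_bigr => p _.
    change (2^-1 *: (p.1 *: p.2 + p.1^* *: p.2) = 'Re p.1 *: p.2).
    by rewrite -scalerDl scalerA ReE mulrC.
  exists (size l), (fun i => 'Re (nth (0, 0) l i).1), (fun i => (nth (0, 0) l i).2).
  split; first by move=> a; apply: hl; exact: mem_nth.
  split; first by move=> a; exact: Creal_Re.
  split; last by rewrite {1}hre (big_nth (0,0)) big_mkord.
  transitivity (\sum_(p <- l) 'Re p.1); first by rewrite (big_nth (0,0)) big_mkord.
  rewrite -(proj2 dr) {1}hre trace_sum big_seq [RHS]big_seq.
  apply: eq_bigr => p /hl hp; rewrite mxtraceZ.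
  by case: (pow_herm hF' hp) => _ ->; rewrite mulr1.
- move=> [sigma [[[k [t [s [hs [_ [_ eq]]]]]] ds] nF]].
  exists sigma; split => //; split => //.
  rewrite eq (lin_sum (@tens_pow_lin C d Delta N)); apply: eq_bigr => a _.
  by rewrite (linZ (@tens_pow_lin C d Delta N)) (pow_fix hlin hF' (hs a)).
Qed.
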